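(* Let $U_1,U_2,V_1,V_2$ be independent real random variables. Assume there exist $0\le c_0\le1$ and $x_0>0$ such that for all $0\le x\le x_0$, $$\mathbb P(|U_1|\ge x)=\mathbb P(|V_1|\ge x)(1+\theta_{1,x}),\qquad\mathbb P(|U_2|\ge x)=\mathbb P(|V_2|\ge x)(1+\theta_{2,x}),$$ with $|\theta_{1,x}|\le c_0$ and $|\theta_{2,x}|\le c_0$. Then for all $0\le x\le x_0$, $$\mathbb P(U_1^2+U_2^2\ge x^2)=\mathbb P(V_1^2+V_2^2\ge x^2)(1+\theta_x)$$ for some $\theta_x$ with $|\theta_x|\le3c_0$. *)

(* Defs.v *)
From HB Require Import structures.
From mathcomp Require Import all_boot all_order all_algebra.
From mathcomp Require Import all_classical all_reals all_analysis.
Set Implicit Arguments. Unset Strict Implicit. Unset Printing Implicit Defensive.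
Import Order.TTheory GRing.Theory Num.Theory.
Local Open Scope classical_set_scope.
Local Open Scope ring_scope.

(* Mutual independence of four real random variables: for all Borel sets
   B1..B4, P(X1 in B1, ..., X4 in B4) = prod P(Xi in Bi).  Taking some Bi = setT
   yields the product rule for every subfamily. *)
Definition independent4 d (T : measurableType d) (R : realType)
  (P : probability T R) (X1 X2 X3 X4 : {RV P >-> R}) : Prop :=
  forall B1 B2 B3 B4 : set R,
    measurable B1 -> measurable B2 -> measurable B3 -> measurable B4 ->
    P (X1 @^-1` B1 `&` X2 @^-1` B2 `&` X3 @^-1` B3 `&` X4 @^-1` B4) =
    (P (X1 @^-1` B1) * P (X2 @^-1` B2) * P (X3 @^-1` B3) * P (X4 @^-1` B4))%E.

(* Main.v *)
Require Import Defs.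
From HB Require Import structures.
From mathcomp Require Import all_boot all_order all_algebra.
From mathcomp Require Import all_classical all_reals all_analysis.
From mathcomp Require Import lra measurable_realfun.
Import Order.TTheory GRing.Theory Num.Theory.
Local Open Scope classical_set_scope.
Local Open Scope ring_scope.

Definition indep2 {d} {T : measurableType d} {R : realType}
  {P : probability T R} (X Y : {RV P >-> R}) : Prop :=
  forall A B : set R, measurable A -> measurable B ->
    P (X @^-1` A `&` Y @^-1` B) = (P (X @^-1` A) * P (Y @^-1` B))%E.

Lemma indep2C {d} {T : measurableType d} {R : realType}
  {P : probability T R} (X Y : {RV P >-> R}) : indep2 X Y -> indep2 Y X.
Proof. by move=> h A B mA mB; rewrite setIC h // muleC. Qed.

Definition Aset {R : realType} (x : R) : set (R * R) :=
  [set p | x ^+ 2 <= p.2 ^+ 2 + p.1 ^+ 2].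

Lemma measurable_Aset {R : realType} (x : R) : measurable (Aset x).
Proof.
have -> : Aset x = (fun p : R * R => p.2 ^+ 2 + p.1 ^+ 2) @^-1` `[x ^+ 2, +oo[.
  by apply/seteqP; split => p /=; rewrite /Aset /= in_itv /= andbT.
have mf : measurable_fun setT (fun p : R * R => p.2 ^+ 2 + p.1 ^+ 2).
  apply: (measurable_realfun.measurable_funD (f := fun p : R * R => p.2 ^+ 2)
    (g := fun p : R * R => p.1 ^+ 2)).
  - exact: measurableT_comp (measurable_realfun.exprn_measurable _) measurable_snd.
  - exact: measurableT_comp (measurable_realfun.exprn_measurable _) measurable_fst.
rewrite -[X in measurable X]setTI; exact: mf measurableT _ (measurable_itv _).
Qed.

Section rep.
Context d (T : measurableType d) (R : realType) (P : probability T R)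
  (X Y : {RV P >-> R}).

Definition pYX (w : T) : R * R := (Y w, X w).
Lemma mpYX : measurable_fun setT pYX.
Proof. by apply: measurable_fun_pair; exact: measurable_funPT. Qed.
HB.instance Definition _ := isMeasurableFun.Build _ _ _ _ pYX mpYX.

Lemma rep (x : R) : indep2 X Y ->
  P [set w | x ^+ 2 <= X w ^+ 2 + Y w ^+ 2] =
  ((distribution P Y \x distribution P X) (Aset x))%E.
Proof.
move=> hI.
have dE : forall d' (T' : measurableType d') (f : {mfun T >-> T'}) A,
  distribution P f A = P (f @^-1` A) by [].
rewrite (product_measure_unique (m' := distribution P pYX)); last 2 first.
- move=> A B mA mB.
  change (P (pYX @^-1` (A `*` B)) = P (Y @^-1` A) * P (X @^-1` B))%E.
  have -> : pYX @^-1` (A `*` B) = X @^-1` B `&` Y @^-1` A.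
    by apply/seteqP; split => w /= [? ?].
  by rewrite hI // muleC.
- exact: measurable_Aset.
rewrite [RHS](_ : _ = P (pYX @^-1` Aset x))//.
Qed.
End rep.

Lemma sec_iff {R : realType} (x y a : R) : 0 <= x ->
  (x ^+ 2 <= a ^+ 2 + y ^+ 2) = (Num.sqrt (x ^+ 2 - y ^+ 2) <= `|a|).
Proof.
move=> x0.
have [h|h] := leP (x ^+ 2 - y ^+ 2) 0.
  rewrite ler0_sqrtr // normr_ge0; apply/idP.
  have : 0 <= a ^+ 2 by rewrite sqr_ge0.
  lra.
set t := Num.sqrt _.
have t0 : 0 <= t by rewrite sqrtr_ge0.
have tt : t ^+ 2 = x ^+ 2 - y ^+ 2 by rewrite sqr_sqrtr // ltW.
have aa : `|a| ^+ 2 = a ^+ 2 by rewrite real_normK ?num_real.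
have a0 : 0 <= `|a| by rewrite normr_ge0.
apply/idP/idP => H.
- rewrite leNgt; apply/negP => H2.
  have : `|a| ^+ 2 < t ^+ 2 by rewrite ltr_pXn2r // ?ltr_pXn2r ?sqr_ge0 //.
  lra.
- have : t ^+ 2 <= `|a| ^+ 2 by rewrite ler_pXn2r.
  lra.
Qed.

Lemma sqrt_le {R : realType} (x y : R) : 0 <= x -> Num.sqrt (x ^+ 2 - y ^+ 2) <= x.
Proof.
move=> x0; rewrite -{2}(ger0_norm x0) -sqrtr_sqr ler_sqrt ?sqr_ge0 //.
have : 0 <= y ^+ 2 by rewrite sqr_ge0.
lra.
Qed.

Section compare.
Context d (T : measurableType d) (R : realType) (P : probability T R).

Lemma secE (X : {RV P >-> R}) (x y : R) : 0 <= x ->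
  distribution P X (xsection (Aset x) y) =
  P [set w | Num.sqrt (x ^+ 2 - y ^+ 2) <= `|X w|].
Proof.
move=> x0.
rewrite [LHS](_ : _ = P (X @^-1` xsection (Aset x) y))//; congr (P _).
apply/seteqP; split => w /=; rewrite /xsection /= inE /Aset /= sec_iff //.
Qed.

Lemma compare (X X' Y : {RV P >-> R}) (x k1 k2 : R) :
  0 <= x -> 0 <= k1 -> 0 <= k2 -> indep2 X Y -> indep2 X' Y ->
  (forall t, 0 <= t -> t <= x ->
    (k1%:E * P [set w | (t <= `|X w|)%R] <= k2%:E * P [set w | (t <= `|X' w|)%R])%E) ->
  (k1%:E * P [set w | (x ^+ 2 <= X w ^+ 2 + Y w ^+ 2)%R] <=
   k2%:E * P [set w | (x ^+ 2 <= X' w ^+ 2 + Y w ^+ 2)%R])%E.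
Proof.
move=> x0 k10 k20 hXY hX'Y H.
rewrite !rep // /product_measure1.
have mfx : forall Z : {RV P >-> R},
  measurable_fun [set: R] (fun y : R => distribution P Z (xsection (Aset x) y)).
  by move=> Z; exact: measurable_fun_xsection (measurable_Aset x).
rewrite -!ge0_integralZl_EFin //; try (by move=> y _; exact: measure_ge0); try exact: mfx.
apply: ge0_le_integral => //.
- by move=> y _; rewrite mule_ge0 // lee_fin.
- exact: measurable_funeM (mfx X).
- exact: measurable_funeM (mfx X').
move=> y _ /=; rewrite !secE //; apply: H.
- by rewrite sqrtr_ge0.
- exact: sqrt_le.
Qed.
End compare.

Section finals.
Context d (T : measurableType d) (R : realType) (P : probability T R).

Lemma mes1 (X : {RV P >-> R}) (t : R) : measurable [set w | (t <= `|X w|)%R].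
Proof.
have -> : [set w | (t <= `|X w|)%R] = (fun w => `|X w|) @^-1` `[t, +oo[.
  by apply/seteqP; split => w /=; rewrite in_itv /= andbT.
have mf : measurable_fun setT (Num.norm \o X).
  apply: measurableT_comp; last exact: measurable_funPT.
  exact: normr_measurable.
rewrite -[X in measurable X]setTI; exact: mf measurableT _ (measurable_itv _).
Qed.

Lemma mes2 (X Y : {RV P >-> R}) (x : R) :
  measurable [set w | (x ^+ 2 <= X w ^+ 2 + Y w ^+ 2)%R].
Proof.
have -> : [set w | (x ^+ 2 <= X w ^+ 2 + Y w ^+ 2)%R] = @pYX _ _ _ P X Y @^-1` Aset x by [].
rewrite -[X in measurable X]setTI; exact: (@mpYX _ _ _ P X Y) measurableT _ (measurable_Aset x).
Qed.

Lemma fin_le (A : set T) : measurable A -> P A = (fine (P A))%:E /\ 0 <= fine (P A).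
Proof.
move=> mA; have f := fin_num_measure P A mA.
split; first by rewrite fineK.
by rewrite fine_ge0 // measure_ge0.
Qed.

End finals.

Lemma theta_bounds {R : realType} (p q : \bar R) (th c : R) :
  p \is a fin_num -> (0 <= p)%E -> `|th| <= c -> q = (p * (1 + th)%:E)%E ->
  (1%:E * q <= (1 + c)%:E * p)%E /\ ((1 - c)%:E * p <= 1%:E * q)%E.
Proof.
move: p => [r| |] // _; rewrite lee_fin => r0 hth ->.
rewrite -!EFinM !lee_fin.
move: hth; rewrite ler_norml => /andP [h1 h2].
split; nra.
Qed.

Theorem lemma6p3 (d : measure_display) (T : measurableType d) (R : realType)
  (P : probability T R) (U1 U2 V1 V2 : {RV P >-> R})
  (c0 x0 : R) :
  independent4 U1 U2 V1 V2 ->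
  0 <= c0 -> c0 <= 1 -> 0 < x0 ->
  (forall x : R, 0 <= x -> x <= x0 ->
     exists2 th1 : R, `|th1| <= c0 &
       P [set w | (x <= `|U1 w|)%R] = (P [set w | (x <= `|V1 w|)%R] * (1 + th1)%:E)%E) ->
  (forall x : R, 0 <= x -> x <= x0 ->
     exists2 th2 : R, `|th2| <= c0 &
       P [set w | (x <= `|U2 w|)%R] = (P [set w | (x <= `|V2 w|)%R] * (1 + th2)%:E)%E) ->
  forall x : R, 0 <= x -> x <= x0 ->
    exists2 th : R, `|th| <= 3 * c0 &
      P [set w | (x ^+ 2 <= U1 w ^+ 2 + U2 w ^+ 2)%R] =
      (P [set w | (x ^+ 2 <= V1 w ^+ 2 + V2 w ^+ 2)%R] * (1 + th)%:E)%E.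
Proof.
move=> hI c00 c01 x00 h1 h2 x hx xx0.
have iU1U2 : indep2 U1 U2.
  move=> A B mA mB; have := hI A B setT setT mA mB measurableT measurableT.
  by rewrite !preimage_setT !setIT probability_setT !mule1.
have iV1U2 : indep2 V1 U2.
  move=> A B mA mB; have := hI setT B A setT measurableT mB mA measurableT.
  rewrite !preimage_setT !setIT setTI probability_setT mule1 mul1e => E.
  by rewrite setIC E muleC.
have iV2V1 : indep2 V2 V1.
  move=> A B mA mB; have := hI setT setT B A measurableT measurableT mB mA.
  rewrite !preimage_setT !setTI probability_setT !mul1e => E.
  by rewrite setIC E muleC.
have iU2V1 : indep2 U2 V1 by exact: indep2C.
have iV1V2 : indep2 V1 V2 by exact: indep2C.
have b1 : forall t, 0 <= t -> t <= x ->
    (1%:E * P [set w | (t <= `|U1 w|)%R] <= (1 + c0)%:E * P [set w | (t <= `|V1 w|)%R])%E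
    /\ ((1 - c0)%:E * P [set w | (t <= `|V1 w|)%R] <= 1%:E * P [set w | (t <= `|U1 w|)%R])%E.
  move=> t t0 tx; have [th hth E] := h1 t t0 (le_trans tx xx0).
  apply: theta_bounds hth E; first exact: (fin_num_measure P _ (@mes1 _ _ _ P _ t)).
  exact: measure_ge0.
have b2 : forall t, 0 <= t -> t <= x ->
    (1%:E * P [set w | (t <= `|U2 w|)%R] <= (1 + c0)%:E * P [set w | (t <= `|V2 w|)%R])%E
    /\ ((1 - c0)%:E * P [set w | (t <= `|V2 w|)%R] <= 1%:E * P [set w | (t <= `|U2 w|)%R])%E.
  move=> t t0 tx; have [th hth E] := h2 t t0 (le_trans tx xx0).
  apply: theta_bounds hth E; first exact: (fin_num_measure P _ (@mes1 _ _ _ P _ t)).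
  exact: measure_ge0.
have c1 : (0 <= 1 + c0) by lra.
have c2 : (0 <= 1 - c0) by lra.
have up1 := @compare _ _ _ P _ _ _ _ _ _ hx ler01 c1 iU1U2 iV1U2 (fun t a b => (b1 t a b).1).
have lo1 := @compare _ _ _ P _ _ _ _ _ _ hx c2 ler01 iV1U2 iU1U2 (fun t a b => (b1 t a b).2).
have up2 := @compare _ _ _ P _ _ _ _ _ _ hx ler01 c1 iU2V1 iV2V1 (fun t a b => (b2 t a b).1).
have lo2 := @compare _ _ _ P _ _ _ _ _ _ hx c2 ler01 iV2V1 iU2V1 (fun t a b => (b2 t a b).2).
have sw : forall X Y : {RV P >-> R}, [set w | (x ^+ 2 <= X w ^+ 2 + Y w ^+ 2)%R] =
    [set w | (x ^+ 2 <= Y w ^+ 2 + X w ^+ 2)%R].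
  by move=> X Y; apply/seteqP; split => w /=; rewrite addrC.
rewrite (sw V2 V1) in up2 lo2.
rewrite (sw U2 V1) in up2 lo2.
have [EA A0] := @fin_le _ _ _ P _ (@mes2 _ _ _ P U1 U2 x).
have [EB B0] := @fin_le _ _ _ P _ (@mes2 _ _ _ P V1 V2 x).
have [EM M0] := @fin_le _ _ _ P _ (@mes2 _ _ _ P V1 U2 x).
move: up1 lo1 up2 lo2 A0 B0 M0.
rewrite EA EB EM -!EFinM !lee_fin !mul1r.
set a := fine (P [set w | (x ^+ 2 <= U1 w ^+ 2 + U2 w ^+ 2)%R]).
set b := fine (P [set w | (x ^+ 2 <= V1 w ^+ 2 + V2 w ^+ 2)%R]).
set m := fine (P [set w | (x ^+ 2 <= V1 w ^+ 2 + U2 w ^+ 2)%R]) => u1 l1 u2 l2 A0 B0 M0.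
rewrite /= in A0 B0 M0.
have Hl : (1 - 3 * c0) * b <= a by nra.
have Hu : a <= (1 + 3 * c0) * b by nra.
have [b0|bn0] := eqVneq b 0.
  exists 0; first by rewrite normr0 mulr_ge0.
  rewrite b0 mul0e; congr (_ %:E).
  move: Hu; rewrite b0 mulr0 => Hu; lra.
exists (a / b - 1).
- have bp : 0 < b by rewrite lt_neqAle eq_sym bn0.
  rewrite ler_norml; apply/andP; split.
  + rewrite lerBrDr ler_pdivlMr //; lra.
  + rewrite lerBlDr ler_pdivrMr //; lra.
- rewrite -EFinM; congr (_ %:E).
  by rewrite addrC subrK mulrC divfK.
Qed.
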